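(* Let $0<\varepsilon<1/4$ and $3\varepsilon\le\delta\le1$ be real numbers, and let $m,k$ be positive integers with $k\le\delta m/4$. Set $r=(10/\varepsilon^2)\log(1/\varepsilon)$. Let $T_1,\dots,T_l$ be rooted trees, each on at most $t\le m/2$ vertices, such that every level set of every $T_i$ has at most $k$ vertices, and let $e_T=\sum_i e(T_i)$. Let $G$ be a balanced bipartite graph with $n$ vertices in each part and bipartite density $d_G$ (so $e(G)=d_Gn^2$), such that $d_Gn^2\ge e_T+(\delta+\varepsilon)n^2$. If $n\ge m\cdot\exp\big(r\log(1/(\delta+\varepsilon))\big)$, then $G$ contains pairwise edge-disjoint subgraphs isomorphic to $T_1,\dots,T_l$ respectively.
   Context: $\log$ is the natural logarithm. For a rooted tree with root $r$, $N^*(x)$ denotes the set of children of $x$; the level sets are $L_1=\{r\}$ and $L_{i+1}=\bigcup_{x\in L_i}N^*(x)$. A bipartite graph is balanced if its parts have equal size; the bipartite density of a bipartite graph with parts $A,B$ is $e(A,B)/(|A||B|)$. *)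

(* Defs.v *)
From mathcomp Require Import all_boot all_order all_algebra.
From mathcomp Require Import all_classical all_reals all_analysis.
Set Implicit Arguments. Unset Strict Implicit. Unset Printing Implicit Defensive.

Definition edges (U : finType) (e : rel U) : {set {set U}} :=
  [set [set p.1; p.2] | p in [set p : U * U | e p.1 p.2]].

Definition is_tree (U : finType) (e : rel U) : Prop :=
  symmetric e /\ irreflexive e /\ (forall x y, connect e x y) /\
  #|edges e| = #|U| - 1.

Fixpoint reached (U : finType) (e : rel U) (r : U) (i : nat) : {set U} :=
  match i with
  | 0 => [set r]
  | i'.+1 => reached e r i' :|: [set y | [exists x in reached e r i', e x y]]
  end.

(* level_set e r i = L_{i+1} in the paper: L_1 = {r}, L_{i+1} = children of L_i. *)
Definition level_set (U : finType) (e : rel U) (r : U) (i : nat) : {set U} :=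
  match i with
  | 0 => [set r]
  | i'.+1 => reached e r i'.+1 :\: reached e r i'
  end.

(* Balanced bipartite graph with parts 'I_n (left) and 'I_n (right), given by
   adj a b = "left vertex a adjacent to right vertex b". Vertex type: 'I_n + 'I_n. *)
Definition bip_adj (n : nat) (adj : 'I_n -> 'I_n -> bool) : rel ('I_n + 'I_n)%type :=
  fun u v => match u, v with
             | inl a, inr b => adj a b
             | inr b, inl a => adj a b
             | _, _ => false
             end.

Definition bip_edges (n : nat) (adj : 'I_n -> 'I_n -> bool) : nat :=
  #|[set p : 'I_n * 'I_n | adj p.1 p.2]|.

Definition embedding (U V : finType) (e : rel U) (g : rel V) (f : U -> V) : Prop :=
  injective f /\ forall x y, e x y -> g (f x) (f y).

Definition image_edges (U V : finType) (e : rel U) (f : U -> V) : {set {set V}} :=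
  [set [set f p.1; f p.2] | p in [set p : U * U | e p.1 p.2]].

(* Main.v *)
Require Import Defs.
From mathcomp Require Import all_boot all_order all_algebra.
From mathcomp Require Import zify.
Import Order.TTheory GRing.Theory Num.Theory.
Set Implicit Arguments. Unset Strict Implicit. Unset Printing Implicit Defensive.
Local Open Scope nat_scope.

Section Peel.
Variables (V : finType) (g : rel V).
Hypothesis gsym : symmetric g.
Hypothesis girr : irreflexive g.

Definition deg (W : {set V}) u := \sum_(v in W) (g u v : nat).
Definition E2 (W : {set V}) := \sum_(u in W) deg W u.

Lemma sumD1 (F : V -> nat) (W : {set V}) w : w \in W ->
  \sum_(v in W) F v = F w + \sum_(v in W :\ w) F v.
Proof.
move=> wW; rewrite (bigD1 w) //=; congr (_ + _); apply: eq_bigl => v.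
by rewrite in_setD1 andbC.
Qed.

Lemma degD1 (W : {set V}) w : w \in W -> deg W w = deg (W :\ w) w.
Proof. by move=> wW; rewrite /deg (sumD1 _ wW) girr add0n. Qed.

Lemma E2D1 (W : {set V}) w : w \in W -> E2 W = E2 (W :\ w) + 2 * deg W w.
Proof.
move=> wW; rewrite /E2 (sumD1 _ wW).
have -> : \sum_(u in W :\ w) deg W u =
          \sum_(u in W :\ w) ((g u w : nat) + deg (W :\ w) u).
  by apply: eq_bigr => u uW; rewrite /deg (sumD1 _ wW).
rewrite big_split /=.
have -> : \sum_(u in W :\ w) (g u w : nat) = deg W w.
  by rewrite (degD1 wW) /deg; apply: eq_bigr => u _; rewrite gsym.
lia.
Qed.

Lemma peel d : forall W : {set V}, 2 * d * #|W| < E2 W + 2 * #|W| ->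
  exists W', W' != set0 /\ forall u, u \in W' -> d <= deg W' u.
Proof.
move=> W; move: {2}#|W| (leqnn #|W|) => N; elim: N W => [|N IH] W hN h.
  have W0 : W = set0 by apply/eqP; rewrite -cards_eq0; lia.
  by move: h; rewrite W0 /E2 big_set0 cards0 muln0.
case: (boolP [forall (u | u \in W), d <= deg W u]).
  move/forall_inP => H; exists W; split => //.
  case: (eqVneq W set0) => [W0|//]; move: h.
  by rewrite W0 /E2 big_set0 cards0 muln0.
rewrite negb_forall_in => /exists_inP [w wW hw].
apply: (IH (W :\ w)).
  by move: hN; rewrite (cardsD1 w W) wW; lia.
move: h; rewrite (E2D1 wW) (cardsD1 w W) wW.
move: hw; rewrite -ltnNge (degD1 wW) => hw.
nia.
Qed.

Lemma card_set_sum (P : pred V) : #|[set x | P x]| = \sum_x (P x : nat).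
Proof.
rewrite -sum1_card big_mkcond /=; apply: eq_bigr => x _; rewrite inE.
by case: (P x).
Qed.

Lemma card_sum_mem (A : {set V}) : #|A| = \sum_x (x \in A : nat).
Proof.
rewrite -sum1_card big_mkcond /=; apply: eq_bigr => x _.
by case: (x \in A).
Qed.

Lemma pick_nb (W : {set V}) u (A : {set V}) : #|A| < deg W u ->
  exists v, [/\ v \in W, g u v & v \notin A].
Proof.
move=> h.
case: (pickP [pred v | (v \in W) && g u v && (v \notin A)]).
  by move=> v /= /andP [/andP [vW guv] vA]; exists v.
move=> H; exfalso.
have : deg W u <= #|A|.
  rewrite card_sum_mem /deg big_mkcond /=; apply: leq_sum => v _.
  move: (H v) => /=.
  by case: (v \in W); case: (g u v); case: (v \in A).
lia.
Qed.

End Peel.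

Lemma sum_setT (T : finType) (F : T -> nat) :
  \sum_(u in [set: T]) F u = \sum_u F u.
Proof. by apply: eq_bigl => u; rewrite in_setT. Qed.

Lemma E2_bip n (adj : 'I_n -> 'I_n -> bool) :
  E2 (bip_adj adj) [set: ('I_n + 'I_n)%type] = 2 * bip_edges adj.
Proof.
rewrite /E2 /deg /bip_edges card_set_sum sum_setT.
under eq_bigr do rewrite sum_setT.
rewrite big_sumType /=.
under eq_bigr do rewrite big_sumType /= big1 // add0n.
under [X in _ + X]eq_bigr do rewrite big_sumType /= [X in _ + X]big1 // addn0.
rewrite -(pair_big predT predT (fun a b => (adj a b : nat))) /=.
rewrite [X in _ + X]exchange_big /=; lia.
Qed.

Section Tree.
Variables (U : finType) (e : rel U).
Hypothesis tree : is_tree e.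

Definition EX (X : {set U}) := [set s in edges e | s \subset X].

Lemma in_edges x y : e x y -> [set x; y] \in edges e.
Proof. by move=> h; apply/imsetP; exists (x, y) => //; rewrite inE. Qed.

Lemma crossing a b (X : {set U}) : connect e a b -> a \in X -> b \notin X ->
  exists x y, [/\ x \in X, y \notin X & e x y].
Proof.
move=> /connectP [p pth ->]; elim: p a pth => [|c p IH] a /=.
  by move=> _ ->.
move=> /andP [eac pth] aX bX.
case cX: (c \in X); first exact: (IH c pth cX bX).
by exists a, c; rewrite cX.
Qed.

Lemma EX_sub X : EX X \subset edges e.
Proof. by apply/subsetP => s; rewrite inE => /andP []. Qed.

Lemma EX_grow (X : {set U}) y (S : {set {set U}}) : y \notin X ->
  S \subset edges e ->
  (forall s, s \in S -> (y \in s) && (s \subset y |: X)) ->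
  #|EX X| + #|S| <= #|EX (y |: X)|.
Proof.
move=> yX SE hS.
have dis : EX X :&: S = set0.
  apply/setP => s; rewrite !inE; apply/negbTE; apply/negP => /andP [/andP [_ sX] sS].
  move: (hS s sS) => /andP [ys _].
  by move: yX; rewrite (subsetP sX y ys).
rewrite -cardsUI dis cards0 addn0; apply: subset_leq_card.
apply/subsetP => s; rewrite !inE => /orP [/andP [sE sX] | sS].
  rewrite sE /=; apply: (subset_trans sX); exact: subsetU1.
by move: (hS s sS) => /andP [_ ->]; rewrite (subsetP SE s sS).
Qed.

Lemma all_in (X : {set U}) : ~~ [exists b, b \notin X] -> X = setT.
Proof.
move=> H; apply/setP => u; rewrite in_setT.
by case: (boolP (u \in X)) => // uX; case/negP: H; apply/existsP; exists u.
Qed.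

Lemma edges_lb (X : {set U}) : 0 < #|X| ->
  #|EX X| + (#|U| - #|X|) <= #|edges e|.
Proof.
move: {2}(#|U| - #|X|) (leqnn (#|U| - #|X|)) => k.
elim: k X => [|k IH] X hk X0.
  have := subset_leq_card (EX_sub X); lia.
case: (boolP [exists b, b \notin X]); last first.
  move=> /all_in ->; rewrite cardsT subnn addn0.
  exact: subset_leq_card (EX_sub _).
move=> /existsP [b bX].
move: X0; rewrite card_gt0 => /set0Pn [a aX].
have [_ [_ [conn _]]] := tree.
have [x [y [xX yX exy]]] := crossing (conn a b) aX bX.
have hg := EX_grow (S := [set [set x; y]]) yX.
have : #|EX X| + 1 <= #|EX (y |: X)|.
  rewrite -(cards1 [set x; y]); apply: hg.
    by rewrite sub1set in_edges.
  move=> s; rewrite inE => /eqP ->; rewrite !inE eqxx orbT /=.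
  apply/subsetP => z; rewrite !inE => /orP [/eqP -> | /eqP ->].
    by rewrite xX orbT.
  by rewrite eqxx.
have cU := cardsU1 y X; rewrite yX /= in cU.
have cM := max_card (mem (y |: X)).
have := IH (y |: X); rewrite cU.
move=> IH' hlt; have := IH' ltac:(lia) ltac:(lia).
lia.
Qed.

Lemma grow1 (X : {set U}) x y : x \in X -> y \notin X -> e x y ->
  #|EX X| + 1 <= #|EX (y |: X)|.
Proof.
move=> xX yX exy.
rewrite -(cards1 [set x; y]); apply: EX_grow => //.
  by rewrite sub1set in_edges.
move=> s; rewrite inE => /eqP ->; rewrite !inE eqxx orbT /=.
apply/subsetP => z; rewrite !inE => /orP [/eqP -> | /eqP ->].
  by rewrite xX orbT.
by rewrite eqxx.
Qed.

End Tree.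

Section Embed.
Variables (U : finType) (e : rel U) (V : finType) (g : rel V).
Hypothesis tree : is_tree e.
Hypothesis gsym : symmetric g.
Variables (W : {set V}) (r : U).
Hypothesis hdeg : forall u, u \in W -> #|U| <= deg g W u.
Hypothesis W0 : 0 < #|W|.

Lemma embed_step : forall s, 0 < s <= #|U| -> exists (X : {set U}) (f : U -> V),
  [/\ #|X| = s, #|X| <= #|EX e X| + 1, {in X &, injective f},
      {in X, forall x, f x \in W} & {in X &, forall x y, e x y -> g (f x) (f y)}].
Proof.
have [esym [eirr [conn ecard]]] := tree.
elim=> [//|s IH] /andP [_ hs].
case: (posnP s) => [s0 | sp].
  move: W0; rewrite card_gt0 => /set0Pn [w0 w0W].
  exists [set r], (fun _ => w0); split.
  - by rewrite cards1 s0.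
  - by rewrite cards1; lia.
  - by move=> x y; rewrite !inE => /eqP -> /eqP ->.
  - by move=> x.
  - by move=> x y; rewrite !inE => /eqP -> /eqP ->; rewrite eirr.
have [X [f [cX inv finj fW fe]]] : exists (X : {set U}) (f : U -> V),
  [/\ #|X| = s, #|X| <= #|EX e X| + 1, {in X &, injective f},
      {in X, forall x, f x \in W} & {in X &, forall x y, e x y -> g (f x) (f y)}].
  by apply: IH; apply/andP; split; lia.
have : [exists b, b \notin X].
  case: (boolP [exists b, b \notin X]) => // /all_in XT; move: cX; rewrite XT cardsT; lia.
move=> /existsP [b bX].
have : 0 < #|X| by lia.
rewrite card_gt0 => /set0Pn [a aX].
have [x [y [xX yX exy]]] := crossing (conn a b) aX bX.
have fxW := fW x xX.
have hi := leq_imset_card f (mem X).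
have [v [vW gv vX]] : exists v, [/\ v \in W, g (f x) v & v \notin f @: X].
  apply: pick_nb; apply: (leq_ltn_trans (leq_imset_card f X)).
  apply: (leq_trans _ (hdeg fxW)); lia.
have cU := cardsU1 y X; rewrite yX /= in cU.
have cM := max_card (mem (y |: X)).
have lb := edges_lb tree (X := y |: X) ltac:(lia).
have hg1 := grow1 xX yX exy.
have uniq : forall z, z \in X -> e y z -> z = x.
  move=> z zX eyz; apply/eqP; apply/negPn/negP => zx.
  have : #|EX e X| + 2 <= #|EX e (y |: X)|.
    have -> : 2 = #|[set [set x; y]; [set z; y]]|.
      rewrite cards2; case: eqP => // E; exfalso.
      have : x \in [set z; y] by rewrite -E !inE eqxx.
      rewrite !inE => /orP [/eqP xz | /eqP xy].
        by rewrite xz eqxx in zx.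
      by move: yX; rewrite -xy xX.
    apply: EX_grow => //.
      apply/subsetP => s'; rewrite !inE => /orP [/eqP -> | /eqP ->];
        apply: in_edges => //; by rewrite esym.
    move=> s'; rewrite !inE => /orP [/eqP -> | /eqP ->]; rewrite !inE eqxx orbT /=;
      apply/subsetP => w; rewrite !inE => /orP [/eqP -> | /eqP ->];
      by rewrite ?xX ?zX ?eqxx ?orbT.
  lia.
have ny : forall u, u \in X -> (u == y) = false.
  by move=> u uX; apply/negbTE; apply: contraNneq yX => <-.
exists (y |: X), (fun u => if u == y then v else f u); split.
- lia.
- lia.
- move=> u1 u2; rewrite !in_setU1 => /orP [/eqP -> | u1X] /orP [/eqP -> | u2X];
    rewrite ?eqxx ?ny //.
  + by move=> E; move: vX; rewrite E imset_f.
  + by move=> E; move: vX; rewrite -E imset_f.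
  + exact: finj.
- move=> u; rewrite in_setU1 => /orP [/eqP -> | uX]; first by rewrite eqxx.
  by rewrite ny // fW.
- move=> u1 u2; rewrite !in_setU1 => /orP [/eqP -> | u1X] /orP [/eqP -> | u2X];
    rewrite ?eqxx ?ny //.
  + by rewrite eirr.
  + by move=> eyu; rewrite (uniq _ u2X eyu) gsym.
  + by move=> euy; rewrite (uniq _ u1X) // esym.
  + exact: fe.
Qed.

Lemma tree_embed : exists f : U -> V, injective f /\ forall x y, e x y -> g (f x) (f y).
Proof.
have U0 : 0 < #|U| by apply/card_gt0P; exists r.
have [X [f [cX _ finj _ fe]]] := @embed_step #|U| ltac:(by rewrite U0 leqnn).
have XT : X = setT.
  apply: all_in; apply/negP => /existsP [b bX].
  have := cardsC X; have : 0 < #|~: X| by apply/card_gt0P; exists b; rewrite inE.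
  lia.
exists f; split.
  by move=> u1 u2; apply: finj; rewrite XT in_setT.
by move=> x y; apply: fe; rewrite XT in_setT.
Qed.

End Embed.

Lemma bip_sym n (adj : 'I_n -> 'I_n -> bool) : symmetric (bip_adj adj).
Proof. by case=> a; case=> b. Qed.

Lemma bip_irr n (adj : 'I_n -> 'I_n -> bool) : irreflexive (bip_adj adj).
Proof. by case. Qed.

Unset Implicit Arguments.
Section Pack.
Variables (l n t : nat) (U : 'I_l -> finType) (eT : forall i, rel (U i)) (root : forall i, U i).
Hypothesis n0 : 0 < n.
Hypothesis trees : forall i, is_tree (eT i).
Hypothesis sizes : forall i, #|U i| <= t.

Local Notation V := ('I_n + 'I_n)%type.

Lemma emb_mono (adj adj' : 'I_n -> 'I_n -> bool) (W : finType) (e : rel W) (f : W -> V) :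
  (forall a b, adj' a b -> adj a b) ->
  embedding e (bip_adj adj') f -> embedding e (bip_adj adj) f.
Proof.
move=> H [fi fe]; split => // x y /fe.
by case: (f x) => a; case: (f y) => b //=; apply: H.
Qed.

Definition remove (adj : 'I_n -> 'I_n -> bool) (IE : {set {set V}}) :=
  fun a b => adj a b && ([set (inl a : V); inr b] \notin IE).

Lemma remove_count adj IE : bip_edges adj <= bip_edges (remove adj IE) + #|IE|.
Proof.
rewrite /bip_edges.
set A := [set p : 'I_n * 'I_n | adj p.1 p.2].
set A' := [set p : 'I_n * 'I_n | remove adj IE p.1 p.2].
set B := [set p : 'I_n * 'I_n | [set (inl p.1 : V); inr p.2] \in IE].
have h1 : A \subset A' :|: B.
  apply/subsetP => p; rewrite !inE /remove.
  by case: (adj _ _) => //=; case: (_ \in IE).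
have h2 : #|B| <= #|IE|.
  have inj : {in B &, injective (fun p : 'I_n * 'I_n => [set (inl p.1 : V); inr p.2])}.
    move=> [a b] [a' b'] _ _ /= E.
    have : (inl a : V) \in [set inl a'; inr b'] by rewrite -E !inE eqxx.
    rewrite !inE => /orP [/eqP [] ha | /eqP //].
    have : (inr b : V) \in [set inl a'; inr b'] by rewrite -E !inE eqxx orbT.
    rewrite !inE => /orP [/eqP // | /eqP [] hb].
    by rewrite ha hb.
  rewrite -(card_in_imset inj); apply: subset_leq_card.
  apply/subsetP => s /imsetP [p]; rewrite inE => pIE ->; exact: pIE.
have := subset_leq_card h1; have := cardsUI A' B; lia.
Qed.

Lemma IE_card (W : finType) (e : rel W) (f : W -> V) :
  #|image_edges e f| <= #|edges e|.
Proof.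
have -> : image_edges e f = (fun s : {set W} => f @: s) @: edges e.
  rewrite /image_edges /edges -imset_comp; apply: eq_imset => p /=.
  by rewrite imsetU1 imset_set1.
exact: leq_imset_card.
Qed.

Lemma disj_remove adj IE (W : finType) (e : rel W) (f : W -> V) :
  embedding e (bip_adj (remove adj IE)) f -> [disjoint IE & image_edges e f].
Proof.
move=> [_ fe]; rewrite disjoint_subset; apply/subsetP => s sIE.
rewrite inE; apply/negP => /imsetP [p]; rewrite inE => ep sdef.
move: (fe _ _ ep); rewrite sdef in sIE; move: sIE.
case: (f p.1) => a; case: (f p.2) => b //=; rewrite /remove.
  by move=> H /andP [_ H']; rewrite H in H'.
by rewrite [[set inr a; inl b]]setUC => H /andP [_ H']; rewrite H in H'.
Qed.

Definition patch (i0 : 'I_l) (g0 : U i0 -> V) (f1 : forall i, U i -> V) :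
  forall i, U i -> V :=
  fun i => match i0 =P i with
           | ReflectT E => eq_rect i0 (fun j => U j -> V) g0 i E
           | ReflectF _ => f1 i end.

Lemma patch_i0 i0 g0 f1 : patch i0 g0 f1 i0 = g0.
Proof.
rewrite /patch; case: (i0 =P i0) => // E.
by rewrite (eq_irrelevance E (erefl i0)).
Qed.

Lemma patch_ne i0 g0 f1 i : i0 != i -> patch i0 g0 f1 i = f1 i.
Proof. by rewrite /patch; case: (i0 =P i) => // E; rewrite E eqxx. Qed.

Lemma pack : forall (S : {set 'I_l}) adj,
  \sum_(i in S) #|edges (eT i)| + 2 * n * t <= bip_edges adj ->
  exists f : forall i, U i -> V,
    (forall i, i \in S -> embedding (eT i) (bip_adj adj) (f i)) /\
    (forall i j, i \in S -> j \in S -> i != j ->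
       [disjoint image_edges (eT i) (f i) & image_edges (eT j) (f j)]).
Proof.
have triv : forall (S : {set 'I_l}) adj, S = set0 -> exists f : forall i, U i -> V,
    (forall i, i \in S -> embedding (eT i) (bip_adj adj) (f i)) /\
    (forall i j, i \in S -> j \in S -> i != j ->
       [disjoint image_edges (eT i) (f i) & image_edges (eT j) (f j)]).
  move=> S adj ->; exists (fun i _ => inl (Ordinal n0)).
  by split=> [i|i j]; rewrite inE.
move=> S; move: {2}#|S| (leqnn #|S|) => N; elim: N S => [|N IH] S hN adj hE.
  by apply: triv; apply/eqP; rewrite -cards_eq0; lia.
case: (set_0Vmem S) => [S0 | [i0 i0S]]; first exact: triv.
have cV : #|[set: V]| = n + n by rewrite cardsT card_sum card_ord.
have [W [W0 hW]] := @peel V (bip_adj adj) (@bip_sym n adj) (@bip_irr n adj) t [set: V]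
  ltac:(rewrite E2_bip cV; nia).
have [g0 [g0i g0e]] := @tree_embed (U i0) (eT i0) V (bip_adj adj) (trees i0)
  (@bip_sym n adj) W (root i0)
  ltac:(move=> u uW; apply: leq_trans (sizes i0) (hW u uW))
  ltac:(by rewrite card_gt0).
set IE := image_edges (eT i0) g0.
have hE' : \sum_(i in S :\ i0) #|edges (eT i)| + 2 * n * t <= bip_edges (remove adj IE).
  have := remove_count adj IE; have := IE_card _ (eT i0) g0.
  move: hE; rewrite (sumD1 _ i0S).
  move=> h1 h2 h3; have h4 : #|IE| <= #|edges (eT i0)| := h2; lia.
have [f1 [f1e f1d]] := IH (S :\ i0)
  ltac:(move: hN; rewrite (cardsD1 i0 S) i0S; lia) (remove adj IE) hE'.
have g0emb : embedding (eT i0) (bip_adj adj) g0 by split.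
have dIE : forall j, j \in S -> i0 != j -> [disjoint IE & image_edges (eT j) (f1 j)].
  move=> j jS nj; apply: disj_remove; apply: f1e.
  by rewrite in_setD1 eq_sym nj jS.
exists (patch i0 g0 f1); split.
  move=> i iS; case: (eqVneq i0 i) => [<- | ne]; first by rewrite patch_i0.
  rewrite patch_ne //; apply: (@emb_mono adj (remove adj IE)).
    by move=> a b /andP [].
  by apply: f1e; rewrite in_setD1 eq_sym ne iS.
move=> i j iS jS ij.
case: (eqVneq i0 i) => [ei | ni]; case: (eqVneq i0 j) => [ej | nj].
- by move: ij; rewrite -ei -ej eqxx.
- by move: iS ij; rewrite -ei => iS ij; rewrite patch_i0 patch_ne //; apply: dIE.
- move: jS ij; rewrite -ej => jS ij; rewrite patch_i0 patch_ne // disjoint_sym.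
  by apply: dIE.
- rewrite !patch_ne //; apply: f1d => //; rewrite in_setD1 ?iS ?jS andbT eq_sym //.
Qed.

Lemma pack_all adj :
  (\sum_(i < l) #|edges (eT i)|) + 2 * n * t <= bip_edges adj ->
  exists f : forall i, U i -> V,
    (forall i, embedding (eT i) (bip_adj adj) (f i)) /\
    (forall i j, i != j ->
       [disjoint image_edges (eT i) (f i) & image_edges (eT j) (f j)]).
Proof.
move=> h; have [f [fe fd]] := pack [set: 'I_l] adj ltac:(by rewrite sum_setT).
exists f; split => [i | i j ij]; [apply: fe | apply: fd]; by rewrite ?in_setT.
Qed.

Lemma bip_le (adj : 'I_n -> 'I_n -> bool) : bip_edges adj <= n * n.
Proof.
rewrite /bip_edges; have := max_card (mem [set p : 'I_n * 'I_n | adj p.1 p.2]).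
by rewrite card_prod !card_ord.
Qed.

End Pack.

From mathcomp Require Import all_classical all_reals all_analysis.
From mathcomp Require Import lra.
Import Order.TTheory GRing.Theory Num.Theory.
Local Open Scope ring_scope.

Lemma real_part (R : realType) (eps delta : R) (m t n be eT : nat) :
  0 < eps -> eps < 1 / 4 -> 3 * eps <= delta ->
  (0 < m)%N -> (t%:R : R) <= m%:R / 2 -> (be <= n * n)%N ->
  (be%:R : R) >= eT%:R + (delta + eps) * (n%:R) ^+ 2 ->
  (n%:R : R) >= m%:R * expR (10 / eps ^+ 2 * ln (1 / eps) * ln (1 / (delta + eps))) ->
  (0 < n)%N /\ (eT + 2 * n * t <= be)%N.
Proof.
move=> e0 e4 ed m0 tm ben hbe hn.
set x := delta + eps in hbe hn.
have x0 : 0 < x by rewrite /x; lra.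
have m0R : (0 : R) < m%:R by rewrite ltr0n.
have r1 : 1 <= 10 / eps ^+ 2 * ln (1 / eps).
  have hl : ln eps <= eps - 1.
    have := @le_ln1Dx R (eps - 1); rewrite (addrC 1) subrK; apply; lra.
  have hl2 : ln (1 / eps) = - ln eps.
    by rewrite div1r lnV // posrE.
  have he2 : eps ^+ 2 <= 1 / 16 by rewrite expr2; nra.
  have he2p : 0 < eps ^+ 2 by rewrite expr2; nra.
  have h10 : 10 <= 10 / eps ^+ 2.
    rewrite ler_pdivlMr //; nra.
  rewrite hl2; nra.
set r := 10 / eps ^+ 2 * ln (1 / eps) in r1 hn.
have nR : (n%:R : R) ^+ 2 = (n * n)%:R by rewrite natrM expr2.
have beR : (be%:R : R) <= (n%:R) ^+ 2 by rewrite nR ler_nat.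
have eT0 : (0 : R) <= eT%:R by [].
case: (lerP x 1) => hx; last first.
  have : (0 : R) < n%:R.
    apply: (lt_le_trans _ hn); apply: mulr_gt0 => //; exact: expR_gt0.
  move=> n0; exfalso.
  have : (n%:R : R) ^+ 2 < x * n%:R ^+ 2.
    rewrite -{1}(mul1r (n%:R ^+ 2)); by rewrite ltr_pM2r ?exprn_gt0.
  lra.
have lx : 0 <= ln (1 / x) by apply: ln_ge0; rewrite ler_pdivlMr //; lra.
have : 1 / x <= expR (r * ln (1 / x)).
  rewrite -{1}(@lnK R (1 / x)); last by rewrite posrE divr_gt0.
  rewrite ler_expR; nra.
move=> hex.
have hmx : m%:R / x <= (n%:R : R).
  apply: le_trans hn; have -> : m%:R / x = m%:R * (1 / x) by rewrite mul1r.
  by rewrite ler_pM2l.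
have hxn : (m%:R : R) <= x * n%:R.
  by rewrite mulrC -ler_pdivrMr.
have n0 : (0 : R) < n%:R.
  apply: lt_le_trans hmx; by apply: divr_gt0.
split; first by rewrite ltr0n in n0.
rewrite -(ler_nat R) natrD !natrM.
apply: le_trans hbe.
have : (2 * t%:R : R) * n%:R <= x * n%:R * n%:R.
  apply: ler_wpM2r; [exact: ltW | lra].
rewrite expr2 mulrA; lra.
Qed.

Theorem theorem4p2 (R : realType) (eps delta : R) (m k t l : nat)
  (U : 'I_l -> finType) (eT : forall i, rel (U i)) (root : forall i, U i)
  (n : nat) (adj : 'I_n -> 'I_n -> bool) :
  0 < eps -> eps < 1 / 4 ->
  3 * eps <= delta -> delta <= 1 ->
  (0 < m)%N -> (0 < k)%N ->
  (k%:R : R) <= delta * m%:R / 4 ->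
  (t%:R : R) <= m%:R / 2 ->
  (forall i, is_tree (eT i)) ->
  (forall i, (#|U i| <= t)%N) ->
  (forall i j, (#|level_set (eT i) (root i) j| <= k)%N) ->
  let e_T := (\sum_(i < l) #|edges (eT i)|)%N in
  let r := 10 / eps ^+ 2 * ln (1 / eps) in
  ((bip_edges adj)%:R : R) >= e_T%:R + (delta + eps) * (n%:R) ^+ 2 ->
  (n%:R : R) >= m%:R * expR (r * ln (1 / (delta + eps))) ->
  exists f : forall i, U i -> ('I_n + 'I_n)%type,
    (forall i, embedding (eT i) (bip_adj adj) (f i)) /\
    (forall i j, i != j -> [disjoint image_edges (eT i) (f i) & image_edges (eT j) (f j)]).
Proof.
move=> e0 e4 ed d1 m0 k0 hk ht trees sizes levels e_T r hbe hn.
have ben := @bip_le n adj.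
have [n0 hE] := @real_part R eps delta m t n (bip_edges adj) e_T e0 e4 ed m0 ht ben hbe hn.
exact: (@pack_all l n t U eT root n0 trees sizes adj hE).
Qed.
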